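(* Consider non-adaptive sensing $\bm{y} = \bm{A}\bm{x} + \bm{z}$, where $\bm{z} \sim \mathcal{N}(0, \bm{I}_{M\times M})$, $\bm{x}\in\mathbb{R}^N$ is an arbitrary one-sparse signal whose single nonzero entry equals $\mu>0$, and $\bm{A} = [A_1 \cdots A_N]$ is a real-valued $M \times N$ sensing matrix with $M = T\log_2(N)$ measurements, where $T \geq 1$ is a constant, whose columns satisfy $\|A_i\|_2 \leq \tau$ for all $i$. Let $\epsilon \in (0,1/2)$ be a target probability of error, and suppose $\tau = \Theta(Q^{-1}(\epsilon)/\mu)$. Then any such non-adaptive sensing matrix achieving probability of error at most $\epsilon$ in reconstructing $\bm{x}$ must have $l_0$ cost $\|\bm{A}\|_{0,0} = \Theta(N\log_2(N))$ as $N\to\infty$.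
   Context: The $l_0$ cost of $\bm{A}$ is $\|\bm{A}\|_{0,0} = \sum_{i=1}^N\sum_{j=1}^M \mathbb{I}(A(j,i)\neq 0)$, the number of nonzero entries. $Q(a) = \frac{1}{\sqrt{2\pi}}\int_a^\infty e^{-b^2/2}\,db$ is the Gaussian tail function and $Q^{-1}$ its inverse. A non-adaptive strategy acquires all measurements at once with a fixed matrix $\bm{A}$. Achieving probability of error $\epsilon$ means the support of $\bm{x}$ (equivalently $\bm{x}$) can be decided from $\bm{y}$ with error probability at most $\epsilon$; in particular, for each pair $i\neq j$ the pairwise error of distinguishing $\mu A_i$ from $\mu A_j$ in unit-variance Gaussian noise must be at most $\epsilon$. $F(N)=\Theta(g(N))$ means $C_1 g(N)\le F(N)\le C_2 g(N)$ for positive constants $C_1,C_2$ and all large $N$. *)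

(* Defs.v *)
From HB Require Import structures.
From mathcomp Require Import all_boot all_order all_algebra.
From mathcomp Require Import all_classical all_reals all_analysis.
Set Implicit Arguments. Unset Strict Implicit. Unset Printing Implicit Defensive.
Import Order.TTheory GRing.Theory Num.Theory.
Import numFieldNormedType.Exports.
Local Open Scope classical_set_scope.
Local Open Scope ring_scope.

Section Defs.
Variable R : realType.

Definition Qfun (a : R) : R :=
  (Num.sqrt (2 * pi))^-1 *
  fine (\int[@lebesgue_measure R]_(b in `]a, +oo[%classic) (expR (- (b ^+ 2) / 2))%:E)%E.

Definition Qinv (e : R) : R := xget 0 [set q | Qfun q = e].

Definition norm2 (M : nat) (u : 'cV[R]_M) : R :=
  Num.sqrt (\sum_(k < M) u k ord0 ^+ 2).

Definition column (M N : nat) (A : 'M[R]_(M, N)) (i : 'I_N) : 'cV[R]_M := col i A.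

(* Error probability of the optimal (ML) binary test between mu*u and mu*v
   observed in N(0, I) noise: Q(mu * ||u - v||_2 / 2). *)
Definition pairwise_err (M : nat) (mu : R) (u v : 'cV[R]_M) : R :=
  Qfun (mu * norm2 (u - v) / 2).

Definition l0_cost (M N : nat) (A : 'M[R]_(M, N)) : nat :=
  #|[set ij : 'I_M * 'I_N | A ij.1 ij.2 != 0]|.

Definition log2 (x : R) : R := ln x / ln 2.

End Defs.

(* Main.v *)
Require Import Defs.
From HB Require Import structures.
From mathcomp Require Import all_boot all_order all_algebra.
From mathcomp Require Import all_classical all_reals all_analysis.
From mathcomp Require Import measurable_realfun.
From mathcomp Require Import ring lra zify.
Import Order.TTheory GRing.Theory Num.Theory.
Import numFieldNormedType.Exports.
Local Open Scope ring_scope.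
Local Open Scope classical_set_scope.

Section Q.
Variable R : realType.
Let mu := @lebesgue_measure R.
Definition gq (b : R) : R := expR (- (b ^+ 2) / 2).

Lemma gq_ge0 b : 0 <= gq b. Proof. exact: expR_ge0. Qed.
Lemma gq_gt0 b : 0 < gq b. Proof. exact: expR_gt0. Qed.

Lemma gq_normal : gq = normal_fun 0 1.
Proof.
apply/funext => x; rewrite /gq /normal_fun subr0 expr1n. done.
Qed.

Lemma gq_cont : continuous gq.
Proof.
move=> x; apply: (@continuous_comp _ _ _ (fun x : R => - (x ^+ 2) / 2) expR).
  apply: cvgM; last exact: cvg_cst.
  apply: cvgN; apply: (cvg_comp (fun z => z) (fun z => z ^+ 2)).
    exact: cvg_id.
  exact: exprn_continuous.
exact: continuous_expR.
Qed.

Lemma gq_meas : measurable_fun setT gq.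
Proof. rewrite gq_normal; exact: measurable_normal_fun. Qed.

Lemma integralT_gq : (\int[mu]_x (gq x)%:E)%E = (Num.sqrt (2 * pi))%:E.
Proof.
have := @integral_normal_pdf R 0 1.
rewrite /normal_pdf oner_eq0 /= => h.
have peak0 : 0 < normal_peak (1:R) by apply: normal_peak_gt0; rewrite oner_eq0.
move: h; under eq_integral do rewrite EFinM; move=> h.
rewrite ge0_integralZl_EFin //= in h; last 3 first.
- by move=> x _; rewrite lee_fin normal_fun_ge0.
- by apply/measurable_EFinP; exact: measurable_normal_fun.
- exact: ltW.
rewrite -gq_normal in h.
have I0 : (0 <= \int[mu]_x (gq x)%:E)%E by apply: integral_ge0 => x _; rewrite lee_fin gq_ge0.
move: h I0; rewrite /mu; case: (\int[_]_x _)%E => [r| |] //=.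
- move=> /eqP; rewrite eqe => /eqP h _; congr EFin.
  rewrite /normal_peak expr1n mul1r -mulr_natl in h.
  have s0 : Num.sqrt (2 * pi) != 0 :> R by rewrite gt_eqF // sqrtr_gt0 mulr_gt0 // pi_gt0.
  move: h => /(congr1 (fun y => Num.sqrt (2 * pi) * y)).
  by rewrite mulrA divff // mul1r mulr1.
- by rewrite muleC gt0_mulye ?lte_fin.
Qed.

Lemma half_gq : (\int[mu]_(x in `](0%R:R), +oo[%classic) (gq x)%:E)%E = (Num.sqrt (2 * pi) / 2)%:E.
Proof.
have := ge0_symfun_integralT gq_ge0 gq_cont.
rewrite integralT_gq.
have ev : gq =1 gq \o -%R by move=> x; rewrite /gq /= sqrrN.
move=> /(_ ev).
have -> : [set x : R | 0 <= x] = `[(0%R:R), +oo[%classic.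
  by apply/seteqP; split => x/=; rewrite in_itv/= andbT.
rewrite -(@integral_setD1 _ _ 0); last 2 first.
- by apply: measurableD => //.
- by apply/measurable_EFinP; apply: measurable_funTS; exact: gq_meas.
have -> : `[(0%R:R), +oo[%classic `\ (0:R) = `](0%R:R), +oo[%classic.
  apply/seteqP; split => x /=; rewrite !in_itv /= !andbT.
    by move=> [x0 /eqP xn0]; rewrite lt_neqAle eq_sym xn0.
  by move=> x0; split; [exact: ltW| apply/eqP; rewrite gt_eqF].
have I0 : (0 <= \int[mu]_(x in `](0%R:R), +oo[%classic) (gq x)%:E)%E.
  by apply: integral_ge0 => x _; rewrite lee_fin gq_ge0.
move: I0; rewrite /mu; case: (\int[_]_(x in _) _)%E => [r| |] //= _.
- move/eqP; rewrite eqe => /eqP ->; congr EFin.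
  by rewrite mulrAC divff ?mul1r.
- by rewrite muleC gt0_mulye.
Qed.

Definition Iq (a : R) := (\int[mu]_(x in `]a, +oo[%classic) (gq x)%:E)%E.

Lemma QfunE a : Qfun a = (Num.sqrt (2 * pi))^-1 * fine (Iq a).
Proof. by []. Qed.

Lemma Iq_ge0 a : (0 <= Iq a)%E.
Proof. by apply: integral_ge0 => x _; rewrite lee_fin gq_ge0. Qed.

Lemma Iq_le a : (Iq a <= (Num.sqrt (2 * pi))%:E)%E.
Proof.
rewrite -integralT_gq; apply: ge0_subset_integral => //.
- by apply/measurable_EFinP; exact: gq_meas.
- by move=> x _; rewrite lee_fin gq_ge0.
Qed.

Lemma Iq_fin a : Iq a \is a fin_num.
Proof. by rewrite ge0_fin_numE ?Iq_ge0 // (le_lt_trans (Iq_le a)) // ltry. Qed.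

Lemma Qfun0 : Qfun (0:R) = 1 / 2.
Proof.
rewrite QfunE /Iq half_gq /=.
have s0 : Num.sqrt (2 * pi) != 0 :> R by rewrite gt_eqF // sqrtr_gt0 mulr_gt0 // pi_gt0.
by rewrite mulrA mulVf.
Qed.

Lemma Qfun_strict (x q : R) : 0 <= x -> x < q -> Qfun q < Qfun x.
Proof.
move=> x0 xq; rewrite !QfunE.
have s0 : 0 < Num.sqrt (2 * pi) :> R by rewrite sqrtr_gt0 mulr_gt0 // pi_gt0.
rewrite ltr_pM2l ?invr_gt0 //.
have sU : `]x, +oo[%classic = `]x, q]%classic `|` `]q, +oo[%classic.
  apply/seteqP; split => y /=; rewrite !in_itv /= ?andbT.
    move=> xy; case: (leP y q) => yq; [left; apply/andP; split | right] => //.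
  by case=> [/andP[]//|qy]; exact: lt_trans qy.
have -> : Iq x = (\int[mu]_(y in `]x, q]%classic) (gq y)%:E + Iq q)%E.
  rewrite /Iq sU ge0_integral_setU //.
  - by apply/measurable_EFinP; apply: measurable_funTS; exact: gq_meas.
  - by move=> y _; rewrite lee_fin gq_ge0.
  - apply/disj_setPS => y [] /=; rewrite !in_itv /= ?andbT => /andP[_ yq] qy.
    by move: (le_lt_trans yq qy); rewrite ltxx.
have J : ((gq q * (q - x))%:E <= \int[mu]_(y in `]x, q]%classic) (gq y)%:E)%E.
  apply: (@le_trans _ _ (\int[mu]_(y in `]x, q]%classic) (cst (gq q)%:E y))%E).
    rewrite integral_cst //= lebesgue_measure_itv /= lte_fin xq /= -EFinD.
    by rewrite -EFinM.
  apply: ge0_le_integral => //.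
  - by move=> y _; rewrite lee_fin gq_ge0.
  - by apply/measurable_EFinP; apply: measurable_funTS; exact: gq_meas.
  move=> y; rewrite /= in_itv /= => /andP[xy yq]; rewrite lee_fin /gq ler_expR.
  rewrite ler_pM2r // lerN2.
  have y0 : 0 <= y by apply: le_trans x0 (ltW xy).
  nra.
have Jfin : (\int[mu]_(y in `]x, q]%classic) (gq y)%:E)%E \is a fin_num.
  rewrite ge0_fin_numE; last by apply: integral_ge0 => y _; rewrite lee_fin gq_ge0.
  apply: (@le_lt_trans _ _ (Num.sqrt (2 * pi))%:E); last exact: ltry.
  rewrite -integralT_gq; apply: ge0_subset_integral => //.
  - by apply/measurable_EFinP; exact: gq_meas.
  - by move=> y _; rewrite lee_fin gq_ge0.
rewrite (fineD Jfin (Iq_fin q)).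
suff : 0 < fine (\int[mu]_(y in `]x, q]%classic) (gq y)%:E)%E by lra.
rewrite -lte_fin fineK //.
apply: lt_le_trans J; rewrite lte_fin mulr_gt0 // ?gq_gt0 // subr_gt0; exact: xq.
Qed.
End Q.

Local Close Scope classical_set_scope.

Section C.
Variable R : realType.

Lemma floor_abs (t : R) : `|(Num.floor t)%:~R : R| <= `|t| + 1.
Proof.
have h1 := floor_le t; have h2 := floorD1_gt t.
rewrite intrD in h2.
rewrite ler_norml; have ht := ler_norm t; have := ler_norm (- t); rewrite normrN => ht'.
apply/andP; split; lra.
Qed.

Lemma abs_le_sq (t : R) : `|t| <= (t ^+ 2 + 1) / 2.
Proof.
have [t0|t0] := leP 0 t.
  rewrite ger0_norm //; have := sqr_ge0 (t - 1); nra.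
rewrite ltr0_norm //; have := sqr_ge0 (t + 1); nra.
Qed.


Section comb.
Variables (M N : nat) (A : 'M[R]_(M, N)) (D r : R) (s K0 : nat).
Hypothesis D0 : 0 < D.
Hypothesis s0 : (0 < s)%N.
Hypothesis K0h : 2 * r ^+ 2 + 3 / 2 <= K0%:R.
Hypothesis nrm : forall i, \sum_(k < M) A k i ^+ 2 <= (r * D) ^+ 2.
Hypothesis sep : forall i j, i != j -> D ^+ 2 <= \sum_(k < M) (A k i - A k j) ^+ 2.

Let hh := D / (2 * Num.sqrt (s%:R)).
Let sqs : 0 < Num.sqrt (s%:R : R).
Proof. by rewrite sqrtr_gt0 ltr0n. Qed.
Let hh0 : 0 < hh.
Proof. by rewrite /hh divr_gt0 // mulr_gt0. Qed.
Let hh2 : hh ^+ 2 = D ^+ 2 / (4 * s%:R).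
Proof.
rewrite /hh expr_div_n exprMn sqr_sqrtr ?ler0n //.
by congr (_ / (_ * _)); rewrite expr2 -natrM.
Qed.

Definition zz (i : 'I_N) (k : 'I_M) : int := Num.floor (A k i / hh).
Definition supp (i : 'I_N) : nat := #|[set k | A k i != 0]|.

Lemma zz0 i k : A k i = 0 -> zz i k = 0.
Proof. by move=> h; rewrite /zz h mul0r floor0. Qed.

Lemma supp_sum i : (supp i)%:R = \sum_(k < M) ((A k i != 0)%:R : R).
Proof.
rewrite /supp -sum1_card natr_sum big_mkcond /=; apply: eq_bigr => k _.
by rewrite inE; case: (A k i != 0).
Qed.

Lemma zz_diff i j k : zz i k = zz j k -> `|A k i - A k j| < hh.
Proof.
rewrite /zz => e.
have a1 := floor_le (A k i / hh); have a2 := floorD1_gt (A k i / hh).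
have b1 := floor_le (A k j / hh); have b2 := floorD1_gt (A k j / hh).
rewrite e intrD in a1 a2; rewrite intrD in b2.
have : `|A k i / hh - A k j / hh| < 1.
  rewrite ltr_norml; apply/andP; split; lra.
have hi : 0 < hh^-1 by rewrite invr_gt0.
rewrite -mulrBl normrM (gtr0_norm hi) ltr_pdivrMr //.
by rewrite mul1r.
Qed.

Lemma sq_lt_le {x y : R} : `|x| < y -> x ^+ 2 <= y ^+ 2.
Proof.
rewrite ltr_norml => /andP[h1 h2]; nra.
Qed.

Lemma zz_inj i j : (supp i <= s)%N -> (supp j <= s)%N ->
  (forall k, zz i k = zz j k) -> i = j.
Proof.
move=> si sj ez; apply/eqP; apply/negPn/negP => nij.
have := sep i j nij.
have : \sum_(k < M) (A k i - A k j) ^+ 2 <=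
       \sum_(k < M) (((A k i != 0)%:R + (A k j != 0)%:R) * hh ^+ 2).
  apply: ler_sum => k _.
  have d := sq_lt_le (zz_diff i j k (ez k)). 
  have [a0|a0] := eqVneq (A k i) 0; have [b0|b0] := eqVneq (A k j) 0 => /=.
  - by rewrite a0 b0 subrr expr0n /= mulr_ge0 // ?addr_ge0 ?ler0n // sqr_ge0.
  - by rewrite add0r mul1r.
  - by rewrite addr0 mul1r.
  - apply: (le_trans d); rewrite ler_peMl ?sqr_ge0 //; lra.
rewrite -mulr_suml big_split /= -!supp_sum hh2 => h1 h2.
have si' : (supp i)%:R <= s%:R :> R by rewrite ler_nat.
have sj' : (supp j)%:R <= s%:R :> R by rewrite ler_nat.
have sR : 0 < s%:R :> R by rewrite ltr0n.
have : ((supp i)%:R + (supp j)%:R) * (D ^+ 2 / (4 * s%:R)) <= D ^+ 2 / 2.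
  have c0 : 0 <= D ^+ 2 / (4 * s%:R) by rewrite divr_ge0 ?sqr_ge0 // mulr_ge0 // ler0n.
  have e : D ^+ 2 / (4 * s%:R) * s%:R = D ^+ 2 / 4.
    by field; rewrite gt_eqF.
  move: c0 e; set c := D ^+ 2 / (4 * s%:R) => c0 e.
  nra.
have : 0 < D ^+ 2 by rewrite exprn_gt0.
lra.
Qed.

Lemma zz_L1 i : (supp i <= s)%N -> (\sum_(k < M) `|zz i k|%N <= K0 * s)%N.
Proof.
move=> si; rewrite -(ler_nat R) natr_sum natrM.
have : \sum_(k < M) (`|zz i k|%N)%:R <=
       \sum_(k < M) (A k i ^+ 2 / (2 * hh ^+ 2) + (A k i != 0)%:R * (3 / 2) : R).
  apply: ler_sum => k _.
  have [a0|a0] := eqVneq (A k i) 0.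
    by rewrite (zz0 i k a0) a0 expr0n /= !mul0r add0r.
  rewrite /= mul1r natr_absz intr_norm /zz.
  apply: (le_trans (floor_abs _)); apply: (le_trans (lerD (abs_le_sq _) (lexx 1))).
  rewrite expr_div_n le_eqVlt; apply/orP; left; apply/eqP; field.
  by rewrite gt_eqF // exprn_gt0.
rewrite big_split /= -mulr_suml -mulr_suml -supp_sum hh2 => h1.
apply: (le_trans h1).
have hn := nrm i.
have si' : (supp i)%:R <= s%:R :> R by rewrite ler_nat.
have sR : 0 < s%:R :> R by rewrite ltr0n.
have e : (2 * (D ^+ 2 / (4 * s%:R)))^-1 = 2 * s%:R / D ^+ 2.
  by field; rewrite !gt_eqF // exprn_gt0.
rewrite e.
have D2 : 0 < D ^+ 2 by rewrite exprn_gt0.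
set S := \sum_(k < M) A k i ^+ 2 in hn *.
have : S * (2 * s%:R / D ^+ 2) <= 2 * r ^+ 2 * s%:R.
  rewrite mulrA ler_pdivrMr // exprMn in hn *.
  nra.
have := ler_wpM2r (ltW sR) K0h; nra.
Qed.

Definition sym (k : 'I_M) (b : bool) : 'I_(2 * M).+1 := inord (2 * k + b).

Lemma sym_val k b : val (sym k b) = (2 * k + b)%N.
Proof. rewrite /sym /= inordK // ltnS; case: b; have := ltn_ord k; lia. Qed.

Lemma sym_eq k b k' b' : (sym k' b' == sym k b) = (k' == k) && (b' == b).
Proof.
rewrite -val_eqE /= !sym_val.
apply/eqP/andP => [|[/eqP -> /eqP ->]//].
by case: b; case: b' => /= e; (try by exfalso; lia); split => //; rewrite -val_eqE /=; apply/eqP; lia.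
Qed.

Lemma sym_max k b : sym k b != ord_max.
Proof. by rewrite -val_eqE /= sym_val; case: b; have := ltn_ord k; lia. Qed.

Definition lst i := flatten [seq nseq `|zz i k|%N (sym k (zz i k < 0)) | k <- enum 'I_M].
Definition pad i := lst i ++ nseq (K0 * s - size (lst i)) ord_max.

Lemma size_lst i : size (lst i) = (\sum_(k < M) `|zz i k|%N)%N.
Proof.
rewrite /lst size_flatten /shape -map_comp sumnE big_map big_enum /=.
by apply: eq_bigr => k _; rewrite size_nseq.
Qed.

Lemma size_pad i : (supp i <= s)%N -> size (pad i) = (K0 * s)%N.
Proof.
move=> si; rewrite /pad size_cat size_nseq subnKC // size_lst; exact: zz_L1.
Qed.

Lemma count_pad i k b : count_mem (sym k b) (pad i) =
  if (zz i k < 0) == b then `|zz i k|%N else 0%N.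
Proof.
rewrite /pad count_cat count_nseq /= eq_sym (negbTE (sym_max k b)) mul0n addn0.
rewrite /lst count_flatten -map_comp sumnE big_map big_enum /=.
rewrite (bigD1 k) //= big1 ?addn0.
  by rewrite count_nseq /= sym_eq eqxx /=; case: ((zz i k < 0) == b); rewrite ?mul1n ?mul0n.
by move=> k' nk; rewrite count_nseq /= sym_eq (negbTE nk).
Qed.

Lemma decode i k : zz i k =
  if (0 < count_mem (sym k true) (pad i))%N then - (count_mem (sym k true) (pad i))%:Z
  else (count_mem (sym k false) (pad i))%:Z.
Proof.
rewrite !count_pad.
have [z0|z0] := ltP (zz i k) 0 => /=.
  by rewrite absz_gt0 (lt_eqF z0) /= abszE ltr0_norm // opprK.
by rewrite abszE ger0_norm.
Qed.

Definition code i : (K0 * s).-tuple 'I_(2 * M).+1 :=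
  insubd (nseq_tuple (K0 * s) ord_max) (sort (relpre val leq) (pad i)).

Lemma code_val i : (supp i <= s)%N -> val (code i) = sort (relpre val leq) (pad i).
Proof. by move=> si; rewrite val_insubd size_sort size_pad // eqxx. Qed.

Lemma code_sorted i : (supp i <= s)%N -> sorted leq (map val (code i)).
Proof.
move=> si; rewrite code_val // sorted_map; apply: sort_sorted.
by move=> x y; exact: leq_total.
Qed.

Lemma code_inj : {in [set i | (supp i <= s)%N] &, injective code}.
Proof.
move=> i j; rewrite !inE => si sj e.
have : sort (relpre val leq) (pad i) = sort (relpre val leq) (pad j).
  by rewrite -!code_val // e.
move=> es; have pe : perm_eq (pad i) (pad j).
  by rewrite -(perm_sort (relpre val leq)) es perm_sort.
apply: zz_inj si sj _ => k.
by rewrite decode [RHS]decode !(permP pe).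
Qed.

Lemma count_small : (#|[set i | (supp i <= s)%N]| <= 'C(K0 * s + 2 * M, K0 * s))%N.
Proof.
rewrite -(card_in_imset code_inj) -card_sorted_tuples.
apply: subset_leq_card; apply/fintype.subsetP => t /imsetP [i]; rewrite inE => si ->.
by rewrite inE code_sorted.
Qed.

End comb.
End C.

Lemma binom_nat (m nn L : nat) : ('C(nn, L) * m ^ (nn - L) <= (m + 1) ^ nn)%N.
Proof.
have [Lnn|Lnn] := leqP L nn; last by rewrite bin_small.
have Lnn' : (L < nn.+1)%N by rewrite ltnS.
rewrite expnDn (bigD1 (Ordinal Lnn')) //= exp1n muln1.
exact: leq_addr.
Qed.

Section A.
Variable R : realType.

Lemma ln2_le1 : ln (2 : R) <= 1.
Proof.
rewrite -[X in _ <= X](expRK (1:R)) ler_ln ?posrE ?expR_gt0 //.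
by have := expR_ge1Dx (1:R); rewrite (_ : 1 + 1 = 2 :> R) //.
Qed.

Lemma ln2_gt0 : 0 < ln (2 : R).
Proof. by apply: ln_gt0; rewrite ltr1n. Qed.

Lemma binom_real (m nn L : nat) : (2 <= m)%N ->
  ('C(nn, L))%:R <= expR (nn%:R / m%:R + L%:R * ln (m%:R : R)) :> R.
Proof.
move=> m2.
have mR : 0 < m%:R :> R by rewrite ltr0n; lia.
have h1 := binom_nat m nn L.
have h2 : (m ^ nn <= m ^ (nn - L) * m ^ L)%N.
  by rewrite -expnD; apply: leq_pexp2l; lia.
have h3 : ('C(nn, L) * m ^ nn <= (m + 1) ^ nn * m ^ L)%N.
  apply: (leq_trans (leq_mul (leqnn _) h2)); rewrite mulnA leq_mul2r h1 orbT //.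
move: h3; rewrite -(ler_nat R) !natrM !natrX natrD => h3.
rewrite expRD expRM_natl lnK ?posrE //.
have : ('C(nn, L))%:R <= ((m%:R + 1) / m%:R) ^+ nn * m%:R ^+ L :> R.
  rewrite expr_div_n mulrAC ler_pdivlMr ?exprn_gt0 //.
have e : (m%:R + 1) / m%:R = 1 + m%:R^-1 :> R by field; rewrite gt_eqF.
rewrite e => h4; apply: (le_trans h4); apply: ler_wpM2r; first by rewrite exprn_ge0 // ltW.
rewrite mulrC expRM_natr; apply: lerXn2r.
- by rewrite nnegrE addr_ge0 // invr_ge0 ltW.
- by rewrite nnegrE expR_ge0.
- exact: expR_ge1Dx.
Qed.

Lemma asym (T c2 : R) : 1 <= T -> 0 < c2 ->
  exists (K0 m : nat) (a Lam : R),
    (2 <= m)%N /\ (0 < K0)%N /\ c2 ^+ 2 / 2 + 3 / 2 <= K0%:R /\ 0 < a /\ 0 < Lam /\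
    forall N M : nat, Lam < ln (N%:R : R) ->
      T * log2 (N%:R : R) <= M%:R -> M%:R < T * log2 (N%:R : R) + 1 ->
      let s := Num.trunc (a * log2 (N%:R : R)) in
      (0 < s)%N /\ a * log2 (N%:R : R) < s.+1%:R /\
      ('C(K0 * s + 2 * M, K0 * s))%:R <= N%:R / 2 :> R /\ 1 <= log2 (N%:R : R).
Proof.
move=> T1 c20.
set K0 := (Num.trunc (c2 ^+ 2 / 2 + 3 / 2)).+1.
have K0h : c2 ^+ 2 / 2 + 3 / 2 <= K0%:R.
  by apply: ltW; apply: truncnS_gt.
have K0p : (0 < K0)%N by [].
have K01 : 1 <= K0%:R :> R by rewrite ler1n.
have l2 := ln2_gt0; have l21 := ln2_le1.
set m := (Num.trunc (4 * (K0%:R + 2 * T) / ln (2:R))).+2.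
have m2 : (2 <= m)%N by [].
have mR : 4 * (K0%:R + 2 * T) / ln (2:R) < m%:R.
  apply: (lt_le_trans (truncnS_gt _)); rewrite ler_nat; exact: leqnSn.
have mR2 : 2 <= m%:R :> R by rewrite ler_nat.
have lnm : ln (2:R) <= ln (m%:R : R).
  by rewrite ler_ln ?posrE //; lra.
have lnm0 : 0 < ln (m%:R : R) by lra.
have mR' : 4 * (K0%:R + 2 * T) < m%:R * ln (2:R).
  by move: mR; rewrite ltr_pdivrMr.
set a := ln (2:R) / (4 * K0%:R * ln (m%:R : R)).
have a0 : 0 < a by rewrite divr_gt0 // !mulr_gt0 //; lra.
have f1 : a * ln (m%:R : R) * K0%:R = ln (2:R) / 4.
  by rewrite /a; field; rewrite !gt_eqF //; lra.
set Lam := 4 + 4 * K0%:R * ln (m%:R : R).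
have KL : 0 < K0%:R * ln (m%:R : R) by rewrite mulr_gt0 //; lra.
have Lam0 : 0 < Lam by rewrite /Lam; lra.
exists K0, m, a, Lam; do 5 (split => //).
move=> N M hN hM1 hM2 s.
set lam := ln (N%:R : R) in hN *.
have ll : log2 (N%:R : R) * ln (2:R) = lam by rewrite /log2 divfK // gt_eqF.
set l := log2 (N%:R : R) in hM1 hM2 ll *.
have lam4 : 4 < lam by rewrite /Lam in hN; lra.
have l0 : 0 <= l by nra.
have l1 : 1 <= l by nra.
have al : a * l * (4 * K0%:R * ln (m%:R : R)) = lam.
  by rewrite -ll /a; field; rewrite !gt_eqF //; lra.
have al1 : 1 < a * l.
  have : 4 * K0%:R * ln (m%:R : R) < lam by rewrite /Lam in hN; lra.
  have : 0 < 4 * K0%:R * ln (m%:R : R) by rewrite !mulr_gt0 //; lra.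
  nra.
have sle : s%:R <= a * l by rewrite /s truncn_le mulr_ge0 // ltW.
have slt : a * l < s.+1%:R by exact: truncnS_gt.
have s0 : (0 < s)%N by rewrite -(ltr_nat R); move: slt; rewrite -addn1 natrD; lra.
split => //; split => //; split => //.
apply: (le_trans (binom_real _ _ _ m2)).
have -> : N%:R / 2 = expR (lam - ln 2) :> R.
  rewrite expRB /lam lnK ?posrE ?lnK ?posrE //.
  have : 1 < N%:R :> R.
    rewrite ltNge; apply/negP => h; have := ln_le0 h; rewrite -/lam; lra.
  lra.
rewrite ler_expR natrD !natrM.
set P := K0%:R in K0h K01 KL f1 al mR' *.
set sR := s%:R in sle slt *.
set mm := m%:R in mR mR2 lnm lnm0 mR' f1 al *.
set lm := ln mm in lnm lnm0 f1 al KL *.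
have e1 : P * sR * lm <= lam / 4.
  have h1 : P * sR * lm <= P * (a * l) * lm.
    by apply: ler_wpM2r; [lra| apply: ler_wpM2l => //; lra].
  have e : P * (a * l) * lm = (a * lm * P) * l by ring.
  have e' : l * ln (2:R) / 4 = ln 2 / 4 * l by field.
  by rewrite e f1 in h1; rewrite -ll e'.
have e2 : P * a <= 1 / 4 by nra.
have e3 : P * sR + 2%:R * M%:R <= mm * (lam / 4 + 1).
  have h1 : P * sR <= P * (a * l) by apply: ler_wpM2l => //; lra.
  have h2 : P * (a * l) <= l / 4 by nra.
  have h3 : 4 * (P + 2 * T) * l <= mm * lam by rewrite -ll; nra.
  nra.
have e4 : (P * sR + 2%:R * M%:R) / mm <= lam / 4 + 1.
  rewrite ler_pdivrMr; last lra.
  by rewrite [X in _ <= X]mulrC.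
lra.
Qed.
End A.

Section Main.
Variable R : realType.

Lemma l0_sum M N (A : 'M[R]_(M, N)) : l0_cost A = (\sum_(i < N) supp R M N A i)%N.
Proof.
rewrite /l0_cost /supp.
have -> : #|[set ij : 'I_M * 'I_N | A ij.1 ij.2 != 0]%classic| =
          #|[set ij : 'I_M * 'I_N | A ij.1 ij.2 != 0]%SET|.
  apply: eq_card => ij; rewrite inE; apply/idP/idP; rewrite in_setE //.
rewrite -(sum1dep_card (fun ij : 'I_M * 'I_N => A ij.1 ij.2 != 0)).
rewrite -(pair_big_dep xpredT (fun k i => A k i != 0) (fun _ _ => 1%N)) /=.
rewrite (exchange_big_dep xpredT) //=.
by apply: eq_bigr => i _; rewrite sum1dep_card.
Qed.

Lemma norm2_col M N (A : 'M[R]_(M, N)) i :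
  norm2 (column A i) = Num.sqrt (\sum_(k < M) A k i ^+ 2).
Proof. by rewrite /norm2 /column; congr Num.sqrt; apply: eq_bigr => k _; rewrite mxE. Qed.

Lemma norm2_coldiff M N (A : 'M[R]_(M, N)) i j :
  norm2 (column A i - column A j) = Num.sqrt (\sum_(k < M) (A k i - A k j) ^+ 2).
Proof. by rewrite /norm2 /column; congr Num.sqrt; apply: eq_bigr => k _; rewrite !mxE. Qed.

Lemma sqrt_le_sq (S x : R) : 0 <= S -> Num.sqrt S <= x -> S <= x ^+ 2.
Proof.
move=> S0 h; have h1 := sqrtr_ge0 S; have h2 := sqr_sqrtr S0.
rewrite -h2; apply: lerXn2r => //; rewrite nnegrE //.
exact: le_trans h1 h.
Qed.

Lemma le_sqrt_sq (S x : R) : 0 <= x -> 0 <= S -> x <= Num.sqrt S -> x ^+ 2 <= S.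
Proof.
move=> x0 S0 h; rewrite -(sqr_sqrtr S0).
by rewrite lerXn2r ?nnegrE ?sqrtr_ge0.
Qed.

End Main.

Theorem theorem2 (R : realType) (T c1 c2 : R) :
  1 <= T -> 0 < c1 -> 0 < c2 ->
  exists C1 C2 : R, exists N0 : nat,
    0 < C1 /\ 0 < C2 /\
    forall (eps mu tau : R),
      0 < eps -> eps < 1 / 2 -> 0 < mu ->
      c1 * (Qinv eps / mu) <= tau -> tau <= c2 * (Qinv eps / mu) ->
      forall (N M : nat) (A : 'M[R]_(M, N)),
        (N0 <= N)%N ->
        T * log2 (N%:R : R) <= M%:R -> M%:R < T * log2 (N%:R : R) + 1 ->
        (forall i : 'I_N, norm2 (column A i) <= tau) ->
        (forall i j : 'I_N, i != j -> pairwise_err mu (column A i) (column A j) <= eps) ->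
        C1 * (N%:R * log2 (N%:R : R)) <= (l0_cost A)%:R /\
        (l0_cost A)%:R <= C2 * (N%:R * log2 (N%:R : R)).
Proof.
move=> T1 c10 c20.
have [K0 [m [a [Lam [m2 [K0p [K0h [a0 [Lam0 Has]]]]]]]]] := @asym R T c2 T1 c20.
exists (a / 2), (T + 1), (Num.trunc (expR Lam)).+1.
split; first by rewrite divr_gt0.
split; first lra.
move=> eps mu tau e0 e12 mu0 ht1 ht2 N M A hN hM1 hM2 hnorm hpair.
have NR : expR Lam < N%:R.
  by apply: (lt_le_trans (truncnS_gt _)); rewrite ler_nat.
have lnN : Lam < ln (N%:R : R).
  rewrite -[X in X < _](expRK Lam) ltr_ln ?posrE ?expR_gt0 //.
  exact: lt_trans (expR_gt0 _) NR.
have N1 : 1 < N%:R :> R by apply: lt_trans NR; rewrite expR_gt1.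
have [s0 [sl [Cb l1]]] := Has N M lnN hM1 hM2.
move: s0 sl Cb; set s := Num.trunc _ => s0 sl Cb.
move: hM1 hM2 sl Cb l1; set l := log2 _ => hM1 hM2 sl Cb l1.
have NR0 : 0 <= N%:R :> R by [].
split; last first.
  have : (l0_cost A <= M * N)%N.
    rewrite /l0_cost; apply: (leq_trans (max_card _)).
    by rewrite card_prod !card_ord.
  rewrite -(ler_nat R) natrM => h; apply: (le_trans h).
  have : M%:R <= (T + 1) * l by nra.
  move=> h2; have := ler_wpM2r NR0 h2; nra.
have N2 : (1 < N)%N by rewrite -(ltr_nat R).
set q := Qinv eps in ht1 ht2.
have [q0|qpos] := leP q 0.
  exfalso.
  have tau0 : tau <= 0.
    apply: (le_trans ht2); apply: mulr_ge0_le0; first exact: ltW.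
    by rewrite mulr_le0_ge0 // invr_ge0 ltW.
  have Z : forall i k, A k i = 0.
    move=> i k; have h := hnorm i; rewrite norm2_col in h.
    have hS : \sum_(k < M) A k i ^+ 2 = 0.
      have : Num.sqrt (\sum_(k < M) A k i ^+ 2) == 0.
        by rewrite eq_le sqrtr_ge0 (le_trans h tau0).
      rewrite sqrtr_eq0 => hle; apply/eqP; rewrite eq_le hle sumr_ge0 // => k' _.
      exact: sqr_ge0.
    have := psumr_eq0P (fun k' _ => sqr_ge0 (A k' i)) hS (erefl true : true).
    by move=> /(_ k) /eqP; rewrite sqrf_eq0 => /eqP.
  pose i0 : 'I_N := Ordinal (ltn_trans (ltnSn 0) N2).
  pose j0 : 'I_N := Ordinal N2.
  have := hpair i0 j0 isT.
  rewrite /pairwise_err norm2_coldiff.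
  under eq_bigr do rewrite !Z subrr expr0n /=.
  rewrite big1 // sqrtr0 mulr0 mul0r Qfun0; lra.
have Qq : Qfun q = eps.
  move: qpos; rewrite /q /Qinv; case: xgetP => [x _ Px _ | _]; first exact: Px.
  by rewrite ltxx.
set D := 2 * q / mu.
set r := c2 / 2.
have D0 : 0 < D by rewrite /D divr_gt0 // mulr_gt0.
have K0h' : 2 * r ^+ 2 + 3 / 2 <= K0%:R.
  have -> : 2 * r ^+ 2 = c2 ^+ 2 / 2 by rewrite /r; field.
  exact: K0h.
have rD : r * D = c2 * (q / mu) by rewrite /r /D; field; rewrite gt_eqF.
have nrm : forall i, \sum_(k < M) A k i ^+ 2 <= (r * D) ^+ 2.
  move=> i; have h := hnorm i; rewrite norm2_col in h.
  apply: sqrt_le_sq; first by apply: sumr_ge0 => k _; exact: sqr_ge0.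
  by rewrite rD; apply: le_trans ht2.
have sep : forall i j : 'I_N, i != j -> D ^+ 2 <= \sum_(k < M) (A k i - A k j) ^+ 2.
  move=> i j nij; have h := hpair i j nij; rewrite /pairwise_err norm2_coldiff in h.
  move: h; set d := Num.sqrt _ => h.
  have d0 : 0 <= d by exact: sqrtr_ge0.
  have qd : q <= mu * d / 2.
    rewrite leNgt; apply/negP => lt.
    have := @Qfun_strict R _ _ (divr_ge0 (mulr_ge0 (ltW mu0) d0) (ler0n _ 2)) lt.
    rewrite Qq; lra.
  apply: le_sqrt_sq; first exact: ltW.
    by apply: sumr_ge0 => k _; exact: sqr_ge0.
  rewrite /D ler_pdivrMr // -/d; lra.
have cnt := @count_small R M N A D r s K0 D0 s0 K0h' nrm sep.
set B := [set i | (supp R M N A i <= s)%N] in cnt.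
have lowN : (#|~: B| * s.+1 <= \sum_(i < N) supp R M N A i)%N.
  rewrite -sum_nat_const big_mkcond /=; apply: leq_sum => i _.
  rewrite !inE; case: (leqP (supp R M N A i) s) => //= h.
have BN : (#|B| <= N)%N by apply: leq_trans (max_card _) _; rewrite card_ord.
have cB : #|~: B| = (N - #|B|)%N.
  have e := cardsC B; rewrite card_ord in e.
  by apply/eqP; rewrite -(eqn_add2l #|B|) e subnKC.
rewrite (@l0_sum R M N A).
move: lowN; rewrite -(ler_nat R) natrM cB => lowN.
apply: le_trans lowN.
have cntR : (#|B|)%:R <= N%:R / 2 :> R by apply: le_trans Cb; rewrite ler_nat.
rewrite natrB //.
have l0 : 0 <= l by lra.
have h1 : N%:R / 2 <= N%:R - (#|B|)%:R :> R by lra.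
have h2 : a * l <= s.+1%:R by exact: ltW.
have h3 : 0 <= N%:R / 2 :> R by lra.
have : N%:R / 2 * (a * l) <= (N%:R - (#|B|)%:R) * s.+1%:R.
  apply: le_trans (ler_wpM2l h3 h2) _.
  apply: ler_wpM2r => //.
have -> : a / 2 * (N%:R * l) = N%:R / 2 * (a * l) by field.
by [].
Qed.
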